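(* Let $c,d\in\mathbb{N}$ and $I=\mathbb{N}^d\times[c]$. Then every $\mathrm{Sym}$-invariant lattice $L\subseteq\mathbb{Z}^{(I)}$ has a finite equivariant generating set, i.e. there is a finite set $\mathcal{B}\subseteq L$ such that $L$ is generated as an abelian group by $\mathrm{Sym}(\mathcal{B})=\{\sigma(\mathbf{u})\mid\sigma\in\mathrm{Sym},\mathbf{u}\in\mathcal{B}\}$.
   Context: $\mathbb{N}=\{1,2,\dots\}$, $[c]=\{1,\dots,c\}$. $\mathbb{Z}^{(I)}$ is the free abelian group with basis $I$ (finitely supported integer vectors indexed by $I$), with standard basis $\mathbf{e}_{\mathbf{i},j}$, $\mathbf{i}\in\mathbb{N}^d$, $j\in[c]$; a lattice is any subgroup of $\mathbb{Z}^{(I)}$. $\mathrm{Sym}$ is the group of permutations of $\mathbb{N}$ fixing all but finitely many elements; it acts on $\mathbb{Z}^{(I)}$ by the linear extension of $\sigma(\mathbf{e}_{(i_1,\dots,i_d),j})=\mathbf{e}_{(\sigma(i_1),\dots,\sigma(i_d)),j}$. A lattice $L$ is $\mathrm{Sym}$-invariant if $\sigma(L)\subseteq L$ for all $\sigma\in\mathrm{Sym}$. *)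

(* Defs.v *)
From Stdlib Require List.
From mathcomp Require Import all_boot all_order all_algebra.
Set Implicit Arguments. Unset Strict Implicit. Unset Printing Implicit Defensive.
Import Order.TTheory GRing.Theory Num.Theory.
Local Open Scope ring_scope.

(* Multi-indices i in N^d, encoded as d-tuples of nat.  NB: N = {1,2,...} in
   the paper is relabelled as nat = {0,1,...} via n |-> n-1; this is a
   bijection commuting with the permutation action. *)
Definition idx (d : nat) := (d.-tuple nat)%type.

(* Integer vectors indexed by I = N^d x [c] (not yet required finitely supported). *)
Definition vec (d c : nat) := (idx d -> 'I_c -> int)%type.

Definition finsupp (d c : nat) (u : vec d c) : Prop :=
  exists s : seq (idx d), forall (i : idx d) (j : 'I_c), i \notin s -> u i j = 0.

Definition is_lattice (d c : nat) (L : vec d c -> Prop) : Prop :=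
  [/\ forall u, L u -> finsupp u,
      L (fun _ _ => 0),
      forall u v, L u -> L v -> L (fun i j => u i j + v i j)
    & forall u, L u -> L (fun i j => - u i j)].

Definition isSym (sigma : nat -> nat) : Prop :=
  bijective sigma /\ exists N : nat, forall n : nat, (N <= n)%N -> sigma n = n.

(* sym_act sigma u v  <->  v = sigma(u), where sigma(e_{i,j}) = e_{sigma(i),j}
   extended linearly, i.e. v_{(sigma i_1,...,sigma i_d), j} = u_{i,j}. *)
Definition sym_act (d c : nat) (sigma : nat -> nat) (u v : vec d c) : Prop :=
  forall (i : idx d) (j : 'I_c), v [tuple of map sigma i] j = u i j.

Definition sym_invariant (d c : nat) (L : vec d c -> Prop) : Prop :=
  forall sigma, isSym sigma -> forall u v, L u -> sym_act sigma u v -> L v.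

Definition sym_orbit (d c : nat) (B : seq (vec d c)) (v : vec d c) : Prop :=
  exists sigma u, [/\ isSym sigma, List.In u B & sym_act sigma u v].

Definition zspan (d c : nat) (S : vec d c -> Prop) (v : vec d c) : Prop :=
  exists l : seq (int * vec d c),
    (forall p, List.In p l -> S p.2) /\
    forall i j, v i j = \sum_(p <- l) p.1 * p.2 i j.

(* Main.v *)
Require Import Defs.
From Stdlib Require List.
From Stdlib Require Import Classical ClassicalEpsilon FunctionalExtensionality.
From mathcomp Require Import all_boot all_order all_algebra zify.
Set Implicit Arguments. Unset Strict Implicit. Unset Printing Implicit Defensive.
Import GRing.Theory.

Fixpoint lexlt (s t : seq nat) : bool :=
  match s, t with
  | a :: s', b :: t' => (a < b) || ((a == b) && lexlt s' t')
  | _, _ => false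
  end.

Lemma lexlt_irr s : lexlt s s = false.
Proof. by elim: s => //= a s ->; rewrite ltnn eqxx. Qed.

Lemma lexlt_trans s t u : lexlt s t -> lexlt t u -> lexlt s u.
Proof.
elim: s t u => [|a s IH] [|b t] [|c u] //=.
case/orP=> [ab|/andP[/eqP <- st]]; case/orP=> [bc|/andP[/eqP <- tu]].
- by rewrite (ltn_trans ab bc).
- by rewrite ab.
- by rewrite bc.
- by rewrite (IH _ _ st tu) eqxx orbT.
Qed.

Lemma lexlt_total s t : size s = size t -> s != t -> lexlt s t || lexlt t s.
Proof.
elim: s t => [|a s IH] [|b t] //= [E] ne.
case: (ltngtP a b) => ab.
- by [].
- by rewrite orbT.
- subst b; rewrite /=; apply: IH => //.
  by apply: contra ne => /eqP ->.
Qed.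

Lemma lexlt_map (f : nat -> nat) (finc : forall a b, a < b -> f a < f b) s t u v :
  size s = size t ->
  lexlt (map f s ++ u) (map f t ++ v) = lexlt (s ++ u) (t ++ v).
Proof.
have Hlt : forall a b, (f a < f b) = (a < b).
  move=> a b; apply/idP/idP; last exact: finc.
  move=> h; case: (ltngtP a b) => // ab.
    by have := finc _ _ ab; rewrite ltnNge (ltnW h).
  by move: h; rewrite ab ltnn.
have Heq : forall a b, (f a == f b) = (a == b).
  move=> a b; apply/idP/idP; last by move/eqP->.
  move=> /eqP h; apply/eqP; case: (ltngtP a b) => // ab.
  + by have := finc _ _ ab; rewrite h ltnn.
  + by have := finc _ _ ab; rewrite h ltnn.
elim: s t => [|a s IH] [|b t] //= [E].
by rewrite Hlt Heq IH.
Qed.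

Definition Rn (n : nat) (x y : seq nat) : Prop :=
  size x = n /\ size y = n /\ lexlt x y.

Lemma Rn_wf n : well_founded (Rn n).
Proof.
elim: n => [|n IH].
  move=> s; constructor=> x [_ [sy]]; case: s sy => [_|]; last by [].
  by case: x.
have H : forall a s, Acc (Rn n) s -> Acc (Rn n.+1) (a :: s).
  elim/ltn_ind => a IHa s Hs; elim: Hs => {}s _ IHs.
  constructor=> x [sx [sy]]; case: x sx => [|b x]; first by [].
  move=> [sx] /= /orP [ba|/andP[/eqP eab xs]].
  - by apply: IHa => //; apply: IH.
  - rewrite eab; apply: IHs; split; first by [].
    by split; [case: sy|].
move=> s; case: s => [|a s]; last by apply: H; apply: IH.
by constructor=> x [_ [sy]].
Qed.

Lemma minP (P : nat -> Prop) : (exists v, P v) -> exists v, P v /\ forall w, P w -> v <= w.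
Proof.
move=> [v Pv]; apply: NNPP => H.
suff : forall n, forall w, w < n -> ~ P w by move/(_ v.+1 v (ltnSn v)).
elim=> [//|n IHn] w; rewrite ltnS leq_eqVlt => /orP[/eqP ->|]; last exact: IHn.
move=> Pn; apply: H; exists n; split => // w' Pw; rewrite leqNgt; apply/negP => wn.
exact: (IHn w' wn Pw).
Qed.

Definition strinc (phi : nat -> nat) := forall a b, a < b -> phi a < phi b.

Lemma strinc_step (phi : nat -> nat) : (forall k, phi k < phi k.+1) -> strinc phi.
Proof.
move=> H a b; elim: b => // b IH; rewrite ltnS leq_eqVlt => /orP[/eqP ->|ab] //.
exact: ltn_trans (IH ab) (H b).
Qed.

Lemma strinc_mono phi : strinc phi -> forall a b, a <= b -> phi a <= phi b.
Proof. by move=> H a b; rewrite leq_eqVlt => /orP[/eqP ->|/H/ltnW]. Qed.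

Lemma mono_step (y : nat -> nat) : (forall k, y k <= y k.+1) -> forall a b, a <= b -> y a <= y b.
Proof.
move=> H a b; elim: b => [|b IH]; first by rewrite leqn0 => /eqP ->.
rewrite leq_eqVlt => /orP[/eqP ->|]; first by [].
by rewrite ltnS => /IH h; exact: leq_trans h (H b).
Qed.

Lemma subseq_nat (y : nat -> nat) :
  exists phi, strinc phi /\ forall a b, a <= b -> y (phi a) <= y (phi b).
Proof.
have H : forall n, exists i, n < i /\ forall i', n < i' -> y i <= y i'.
  move=> n; have ex : exists v, exists i, n < i /\ y i = v.
    by exists (y n.+1); exists n.+1.
  have [v [[i [ni yi]] vmin]] := minP ex.
  exists i; split => // i' ni'; rewrite yi; apply: vmin; by exists i'.
pose nx n := proj1_sig (constructive_indefinite_description _ (H n)).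
have nxP n : n < nx n /\ forall i', n < i' -> y (nx n) <= y i'.
  exact: proj2_sig (constructive_indefinite_description _ (H n)).
pose fix q k := if k is k'.+1 then nx (q k') else 0.
exists (fun k => q k.+1); split.
  apply: strinc_step => k /=; exact: (nxP _).1.
apply: mono_step => k /=.
apply: (nxP _).2; apply: ltn_trans (nxP _).1 (nxP _).1.
Qed.

Lemma subseq_fam (T : Type) (K : eqType) (G : K -> T -> nat) (x : nat -> T) (s : seq K) :
  exists phi, strinc phi /\ forall k, k \in s -> forall a b, a <= b ->
     G k (x (phi a)) <= G k (x (phi b)).
Proof.
elim: s => [|k0 s [phi1 [inc1 H1]]].
  by exists id; split => // a b.
have [phi2 [inc2 H2]] := subseq_nat (fun n => G k0 (x (phi1 n))).
exists (fun n => phi1 (phi2 n)); split.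
  by move=> a b ab; apply: inc1; apply: inc2.
move=> k; rewrite inE => /orP[/eqP -> |ks] a b ab; first exact: H2.
apply: H1 => //; exact: strinc_mono.
Qed.


Definition tsw (a b x : nat) := if x == a then b else if x == b then a else x.

Lemma tswK a b : cancel (tsw a b) (tsw a b).
Proof.
move=> x; rewrite /tsw.
case: (eqVneq x a) => [->|xa]; first by rewrite eqxx; case: eqVneq.
case: (eqVneq x b) => [->|xb]; first by rewrite eqxx.
by rewrite (negbTE xa) (negbTE xb).
Qed.

Lemma isSym_tsw a b : isSym (tsw a b).
Proof.
split; first by exists (tsw a b); apply: tswK.
exists (maxn a b).+1 => n hn; rewrite /tsw.
have na : n != a by rewrite neq_ltn; apply/orP; right; apply: leq_trans hn; rewrite ltnS leq_maxl.
have nb : n != b by rewrite neq_ltn; apply/orP; right; apply: leq_trans hn; rewrite ltnS leq_maxr.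
by rewrite (negbTE na) (negbTE nb).
Qed.

Lemma isSym_comp s t : isSym s -> isSym t -> isSym (s \o t).
Proof.
move=> [bs [N1 H1]] [bt [N2 H2]]; split; first exact: bij_comp.
exists (maxn N1 N2) => n hn /=.
rewrite H2; last by apply: leq_trans hn; rewrite leq_maxr.
by rewrite H1 //; apply: leq_trans hn; rewrite leq_maxl.
Qed.

Lemma isSym_id : isSym id.
Proof. by split; [exists id|exists 0]. Qed.

Lemma ext_sym (f : nat -> nat) n : (forall x y, x < y -> f x < f y) ->
  exists s, isSym s /\ forall x, x < n -> s x = f x.
Proof.
move=> finc; elim: n => [|n [s [Ss Hs]]]; first by exists id; split => //; exact: isSym_id.
exists (tsw (s n) (f n) \o s); split; first by apply: isSym_comp => //; apply: isSym_tsw.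
move=> x; rewrite ltnS leq_eqVlt => /orP[/eqP ->|xn] /=.
  by rewrite /tsw eqxx.
rewrite /tsw (Hs x xn).
have h1 : f x != s n.
  rewrite -Hs //; apply/negP => /eqP E.
  have [bs _] := Ss; have := bij_inj bs E => xe; by rewrite xe ltnn in xn.
have h2 : f x != f n by rewrite neq_ltn finc.
by rewrite (negbTE h1) (negbTE h2).
Qed.

Section Main.
Variables (d c : nat).
Local Notation T := (idx d * 'I_c)%type.

Definition key (m : T) : seq nat := rcons (val m.1) (val m.2).
Definition ltT (m m' : T) := lexlt (key m) (key m').
Definition isLead (v : vec d c) (m : T) :=
  v m.1 m.2 != 0 /\ forall x : T, v x.1 x.2 != 0 -> x = m \/ ltT x m.

Definition Cb (m m' : T) : bool :=
  [&& m.2 == m'.2, [forall s : 'I_d, tnth m.1 s <= tnth m'.1 s] &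
     [forall s : 'I_d, forall t : 'I_d,
        (tnth m.1 s <= tnth m.1 t) ==> (tnth m'.1 s + tnth m.1 t <= tnth m'.1 t + tnth m.1 s)]].

Lemma ltT_map (f : nat -> nat) (finc : forall a b, a < b -> f a < f b) (i i' : idx d) j j' :
  ltT ([tuple of map f i], j) ([tuple of map f i'], j') = ltT (i, j) (i', j').
Proof.
rewrite /ltT /key /= -!cats1; apply: lexlt_map => //.
by rewrite !size_tuple.
Qed.

Lemma translate (L : vec d c -> Prop) (lat : is_lattice L) (inv : sym_invariant L)
   b (mb m : T) : L b -> isLead b mb -> Cb mb m ->
   exists s b', [/\ isSym s, sym_act s b b', L b', isLead b' m & b' m.1 m.2 = b mb.1 mb.2].
Proof.
move=> Lb [bnz bld] /and3P[/eqP ej /forallP ge /forallP gt].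
pose f x := x + \max_(s | tnth mb.1 s <= x) (tnth m.1 s - tnth mb.1 s).
have finc : forall x y, x < y -> f x < f y.
  move=> x y xy; rewrite /f; apply: leq_trans (_ : y + \max_(s | tnth mb.1 s <= x) (tnth m.1 s - tnth mb.1 s) <= _).
    by rewrite ltn_add2r.
  rewrite leq_add2l; apply/bigmax_leqP => s hs; apply: leq_bigmax_cond.
  by apply: leq_trans hs (ltnW xy).
have fmb : forall t, f (tnth mb.1 t) = tnth m.1 t.
  move=> t; rewrite /f.
  have h1 : \max_(s | tnth mb.1 s <= tnth mb.1 t) (tnth m.1 s - tnth mb.1 s) <= tnth m.1 t - tnth mb.1 t.
    apply/bigmax_leqP => s hs; have := gt s; move/forallP/(_ t); rewrite hs /= => h.
    have := ge s; have := ge t; lia.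
  have h2 : tnth m.1 t - tnth mb.1 t <= \max_(s | tnth mb.1 s <= tnth mb.1 t) (tnth m.1 s - tnth mb.1 s).
    exact: (@leq_bigmax_cond _ (fun s => tnth mb.1 s <= tnth mb.1 t) (fun s => tnth m.1 s - tnth mb.1 s) t (leqnn _)).
  have := ge t; lia.
have [S HS] : finsupp b by case: lat => H _ _ _; apply: H.
pose n := (\max_(i <- S) \max_(s : 'I_d) tnth i s).+1.
have box : forall i j, b i j != 0 -> forall x, x \in (val i) -> x < n.
  move=> i j nz x /tnthP [s ->]; rewrite ltnS.
  have iS : i \in S by apply: contraNT nz => h; apply/eqP; apply: HS.
  apply: leq_trans (leq_bigmax (F:=fun s0 : 'I_d => tnth i s0) s) _.
  exact: (@leq_bigmax_seq _ S xpredT (fun i0 : idx d => \max_(s0 : 'I_d) tnth i0 s0) i iS isT).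
have [s [Ss Hs]] := ext_sym n finc.
have [bs _] := Ss; case: bs => g sg gs.
pose b' := fun (i : idx d) j => b [tuple of map g i] j.
have gsK : forall i : idx d, [tuple of map g (map s i)] = i.
  by move=> i; apply: val_inj => /=; rewrite -map_comp (eq_map sg) map_id.
have sgK : forall i : idx d, [tuple of map s (map g i)] = i.
  by move=> i; apply: val_inj => /=; rewrite -map_comp (eq_map gs) map_id.
have sf : forall i j, b i j != 0 -> [tuple of map s i] = [tuple of map f i].
  move=> i j nz; apply: val_inj => /=; apply/eq_in_map => x xi; apply: Hs; exact: box nz x xi.
have mf : m.1 = [tuple of map f mb.1].
  apply: eq_from_tnth => t; by rewrite tnth_map fmb.
exists s, b'; split => //.
- by move=> i j; rewrite /b' gsK.
- by apply: (inv s Ss b) => // i j; rewrite /b' gsK.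
- split.
  + by rewrite /b' mf -(sf _ _ bnz) gsK -ej.
  + move=> [x j] /= nz; have := nz; rewrite /b' => nz'.
    have xe : x = [tuple of map f [tuple of map g x]] by rewrite -(sf _ _ nz') sgK.
    case: (bld ([tuple of map g x], j) nz') => [E|lt].
      by left; rewrite [m]surjective_pairing mf -ej -E /= -xe.
    right; rewrite [m]surjective_pairing mf -ej {1}xe ltT_map //.
- by rewrite /b' mf -(sf _ _ bnz) gsK -ej.
Qed.

End Main.


Section Ord.
Variables (d c : nat).
Local Notation T := (idx d * 'I_c)%type.

Lemma ltT_wf : well_founded (@ltT d c).
Proof.
have H : forall k, Acc (Rn d.+1) k -> forall m : T, key m = k -> Acc (@ltT d c) m.
  move=> k; elim=> {}k _ IH m E; constructor => x lt; apply: (IH (key x)); last exact: erefl.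
  rewrite -E; split; first by rewrite /key size_rcons size_tuple.
  split; [by rewrite /key size_rcons size_tuple|exact: lt].
by move=> m; apply: (H (key m)); [apply: Rn_wf|exact: erefl].
Qed.

Lemma ltT_irr (m : T) : ltT m m = false.
Proof. exact: lexlt_irr. Qed.

Lemma ltT_trans (x y z : T) : ltT x y -> ltT y z -> ltT x z.
Proof. exact: lexlt_trans. Qed.

Lemma ltT_total (x y : T) : x != y -> ltT x y || ltT y x.
Proof.
move=> ne; apply: lexlt_total; first by rewrite /key !size_rcons !size_tuple.
apply: contra ne => /eqP E; rewrite /key in E.
have [E1 E2] : val x.1 = val y.1 /\ val x.2 = val y.2.
  by move/eqP: E; rewrite eqseq_rcons => /andP[/eqP -> /eqP ->].
by rewrite [x]surjective_pairing [y]surjective_pairing (val_inj E1) (val_inj E2).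
Qed.

Lemma max_exists (s : seq T) : s != [::] ->
  exists2 m, m \in s & forall x, x \in s -> x = m \/ ltT x m.
Proof.
elim: s => [//|a s IH] _.
case: (eqVneq s [::]) => [->|ne].
  exists a; first exact: mem_head.
  by move=> x; rewrite mem_seq1 => /eqP ->; left.
have [m ms Hm] := IH ne.
case: (eqVneq a m) => [am|am].
  exists m; first by rewrite inE ms orbT.
  by move=> x; rewrite inE => /orP[/eqP ->|/Hm]; [left|].
case/orP: (ltT_total am) => lt.
  exists m; first by rewrite inE ms orbT.
  by move=> x; rewrite inE => /orP[/eqP ->|/Hm]; [right|].
exists a; first exact: mem_head.
move=> x; rewrite inE => /orP[/eqP ->|/Hm [->|xm]]; [by left|by right|].
by right; apply: ltT_trans xm lt.
Qed.

Lemma lead_exists (v : vec d c) : finsupp v -> (exists x : T, v x.1 x.2 != 0%R) ->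
  exists m, isLead v m.
Proof.
move=> [S HS] [x nz].
pose Q := [seq p <- [seq (i, j) | i <- S, j <- enum 'I_c] | v p.1 p.2 != 0%R].
have inQ : forall y : T, v y.1 y.2 != 0%R -> y \in Q.
  move=> [i j] /= h; rewrite mem_filter h /=.
  have iS : i \in S by apply: contraNT h => h'; apply/eqP; apply: HS.
  by apply: (allpairs_f (fun i j => (i, j))) => //; rewrite mem_enum.
have Qne : Q != [::] by apply/eqP => E; have := inQ x nz; rewrite E.
have [m mQ Hm] := max_exists Qne.
exists m; split; first by move: mQ; rewrite mem_filter => /andP[].
  by move=> y /inQ /Hm.
Qed.
End Ord.


Lemma In_map_seq (A B : Type) (f : A -> B) (s : seq A) x :
  List.In x (map f s) -> exists y, List.In y s /\ x = f y.
Proof.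
elim: s => [//|a s IH] /= [<-|/IH [y [ys ->]]]; first by exists a; split; [left|].
by exists y; split; [right|].
Qed.

Lemma In_map_seq2 (A B : Type) (f : A -> B) (s : seq A) y :
  List.In y s -> List.In (f y) (map f s).
Proof. by elim: s => [//|a s IH] /= [->|/IH]; [left|right]. Qed.

Lemma In_rcons (A : Type) (s : seq A) a x : List.In x (rcons s a) -> List.In x s \/ x = a.
Proof.
move=> h; rewrite -cats1 in h; case: (List.in_app_or _ _ _ h) => [|[<-|//]]; [by left|by right].
Qed.

Lemma In_rcons2 (A : Type) (s : seq A) a x : List.In x s \/ x = a -> List.In x (rcons s a).
Proof.
by rewrite -cats1; case=> [h|->]; apply: List.in_or_app; [left|right; left].
Qed.

Lemma sum_nz (A : Type) (l : seq A) (F : A -> int) :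
  (\sum_(q <- l) F q)%R != 0%R -> exists q, List.In q l /\ F q != 0%R.
Proof.
elim: l => [|a l IH]; first by rewrite big_nil eqxx.
rewrite big_cons; case: (eqVneq (F a) 0%R) => [->|h] hs.
  by rewrite add0r in hs; have [q [ql qn]] := IH hs; exists q; split; [right|].
by exists a; split; [left|].
Qed.

Section Lat.
Variables (d c : nat) (L : vec d c -> Prop).
Hypotheses (lat : is_lattice L) (inv : sym_invariant L).
Local Notation T := (idx d * 'I_c)%type.

Lemma Lext (u v : vec d c) : L u -> (forall i j, u i j = v i j) -> L v.
Proof.
move=> Lu E; have -> : v = u; last by [].
by apply: functional_extensionality => i; apply: functional_extensionality => j.
Qed.

Lemma L0 : L (fun _ _ => 0%R).
Proof. by case: lat. Qed.

Lemma Ladd u v : L u -> L v -> L (fun i j => u i j + v i j)%R.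
Proof. by case: lat => _ _ H _; apply: H. Qed.

Lemma Lneg u : L u -> L (fun i j => - u i j)%R.
Proof. by case: lat => _ _ _ H; apply: H. Qed.

Lemma Lscale (k : int) u : L u -> L (fun i j => k * u i j)%R.
Proof.
move=> Lu.
have Hn : forall n : nat, L (fun i j => (Posz n) * u i j)%R.
  elim=> [|n IH]; first by apply: Lext L0 _ => i j; rewrite mul0r.
  apply: Lext (Ladd IH Lu) _ => i j.
  by rewrite -addn1 PoszD mulrDl mul1r.
case: k => n; first exact: Hn.
apply: Lext (Lneg (Hn n.+1)) _ => i j.
by rewrite NegzE mulNr.
Qed.

Lemma Lcomb (l : seq (int * vec d c)) : (forall q, List.In q l -> L q.2) ->
  L (fun i j => \sum_(q <- l) q.1 * q.2 i j)%R.
Proof.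
elim: l => [|q l IH] H.
  apply: (Lext L0) => i j; exact: (esym (big_nil _ _ _ _)).
apply: Lext (Ladd (Lscale q.1 (H q (or_introl erefl))) (IH (fun q' h => H q' (or_intror h)))) _.
by move=> i j; rewrite big_cons.
Qed.

Lemma zspan0 S (v : vec d c) : (forall i j, v i j = 0%R) -> zspan S v.
Proof. by move=> H; exists [::]; split => // i j; rewrite big_nil H. Qed.

Lemma zspan_add S (w v : vec d c) (l : seq (int * vec d c)) :
  zspan S w -> (forall q, List.In q l -> S q.2) ->
  (forall i j, v i j = w i j + \sum_(q <- l) q.1 * q.2 i j)%R -> zspan S v.
Proof.
move=> [lw [Hlw Ew]] Hl Ev; exists (lw ++ l); split.
  by move=> p h; case: (List.in_app_or _ _ _ h) => [/Hlw|/Hl].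
by move=> i j; rewrite big_cat /= -Ew Ev.
Qed.

Definition lc (p : vec d c * T) : int := p.1 p.2.1 p.2.2.
Definition gB (Bs : seq (vec d c * T)) (m : T) : nat :=
  \big[gcdn/0%N]_(p <- Bs | Cb p.2 m) `|lc p|%N.

Lemma gB_dvd Bs m p : List.In p Bs -> Cb p.2 m -> (gB Bs m %| `|lc p|)%N.
Proof.
rewrite /gB; elim: Bs => [//|a Bs IH] /= [<-|pB] Cp; rewrite big_cons.
  by rewrite Cp dvdn_gcdl.
case: (Cb a.2 m); last exact: IH.
exact: dvdn_trans (dvdn_gcdr _ _) (IH pB Cp).
Qed.

Lemma comb (O : vec d c -> Prop) Bs m
  (HB : forall p, List.In p Bs -> Cb p.2 m ->
     exists b', [/\ L b', isLead b' m, b' m.1 m.2 = lc p & O b']) (a : int) :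
  (gB Bs m %| `|a|)%N ->
  exists l : seq (int * vec d c),
    (forall q, List.In q l -> [/\ L q.2, isLead q.2 m & O q.2]) /\
    a = (\sum_(q <- l) q.1 * q.2 m.1 m.2)%R.
Proof.
elim: Bs HB a => [|p Bs IH] HB a.
  rewrite /gB big_nil dvd0n absz_eq0 => /eqP ->.
  by exists [::]; split => //; rewrite big_nil.
have HB' : forall p0, List.In p0 Bs -> Cb p0.2 m ->
     exists b', [/\ L b', isLead b' m, b' m.1 m.2 = lc p0 & O b'].
  by move=> p0 h; apply: HB; right.
rewrite /gB big_cons; case Cp: (Cb p.2 m); last exact: IH.
rewrite -/(gB Bs m); set y := gB Bs m; move=> hd.
have [u [v E]] := Bezoutz (lc p) (Posz y).
have /dvdzP [k ->] : (Posz (gcdn `|lc p| y) %| a)%Z by [].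
have [l [Hl El]] := IH HB' (Posz y) (dvdnn _).
have [b' [Lb' Hb' Eb' Ob']] := HB p (or_introl erefl) Cp.
exists (((k * u)%R, b') :: [seq ((k * v * q.1)%R, q.2) | q <- l]); split.
  move=> q /= [<-|h] //; have [q' [q'l ->]] := In_map_seq h.
  exact: (Hl q' q'l).
rewrite big_cons big_map /= Eb'.
have -> : Posz (gcdn `|lc p| y) = gcdz (lc p) (Posz y) by [].
rewrite -E El mulrDr mulr_sumr !mulrA; congr (_ + _)%R.
rewrite mulr_sumr; apply: eq_bigr => q _; by rewrite !mulrA.
Qed.

End Lat.


Section Red.
Variables (d c : nat) (L : vec d c -> Prop).
Hypotheses (lat : is_lattice L) (inv : sym_invariant L).
Local Notation T := (idx d * 'I_c)%type.

Definition valid (Bs : seq (vec d c * T)) :=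
  forall p, List.In p Bs -> L p.1 /\ isLead p.1 p.2.
Definition Good (Bs : seq (vec d c * T)) :=
  forall v m, L v -> isLead v m -> (gB Bs m %| `|v m.1 m.2|)%N.

Lemma fins v : L v -> finsupp v.
Proof. by case: lat => H _ _ _; apply: H. Qed.

Lemma reduce Bs : valid Bs -> Good Bs ->
  forall v, L v -> zspan (sym_orbit (map fst Bs)) v.
Proof.
move=> vB GB.
have Q : forall m v, L v -> (forall x : T, v x.1 x.2 != 0%R -> x = m \/ ltT x m) ->
    zspan (sym_orbit (map fst Bs)) v.
  move=> m; elim: (ltT_wf m) => {}m _ IH v Lv Hv.
  have dv : (gB Bs m %| `|v m.1 m.2|)%N.
    case: (eqVneq (v m.1 m.2) 0%R) => [->|nz]; first by rewrite dvdn0.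
    by apply: GB => //; split.
  have HB : forall p, List.In p Bs -> Cb p.2 m ->
     exists b', [/\ L b', isLead b' m, b' m.1 m.2 = lc p & sym_orbit (map fst Bs) b'].
    move=> p pB Cp; have [Lp Hp] := vB p pB.
    have [s [b' [Ss Ab Lb' Hb' Eb']]] := translate lat inv Lp Hp Cp.
    exists b'; split => //; exists s, p.1; split => //.
    exact: In_map_seq2.
  have [l [Hl El]] := comb HB dv.
  pose w := fun i j => (v i j - \sum_(q <- l) q.1 * q.2 i j)%R.
  have Lw : L w.
    apply: Lext (Ladd lat Lv (Lneg lat (Lcomb lat (l := l) _))) _ => //.
    by move=> q /Hl [].
  have Hw : forall x : T, w x.1 x.2 != 0%R -> ltT x m.
    move=> x nz; case: (eqVneq x m) => [E|ne].
      by move: nz; rewrite /w E -El subrr eqxx.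
    case: (eqVneq (v x.1 x.2) 0%R) => [v0|vnz].
      move: nz; rewrite /w v0 sub0r oppr_eq0 => /sum_nz [q [ql qn]].
      have [_ [_ Hq] _] := Hl q ql.
      have qn' : q.2 x.1 x.2 != 0%R by apply: contra qn => /eqP ->; rewrite mulr0.
      by case: (Hq x qn') => // E; rewrite E eqxx in ne.
    by case: (Hv x vnz) => // E; rewrite E eqxx in ne.
  have zw : zspan (sym_orbit (map fst Bs)) w.
    case: (classic (exists x : T, w x.1 x.2 != 0%R)) => [ex|nex].
      have [m' [m'nz Hm']] := lead_exists (fins Lw) ex.
      exact: (IH m' (Hw m' m'nz) w Lw Hm').
    apply: zspan0 => i j; apply/eqP; apply: negbNE; apply/negP => h.
    by apply: nex; exists (i, j).
  apply: zspan_add zw _ _.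
    by move=> q /Hl [].
  by move=> i j; rewrite /w subrK.
move=> v Lv; case: (classic (exists x : T, v x.1 x.2 != 0%R)) => [ex|nex].
  have [m [mnz Hm]] := lead_exists (fins Lv) ex.
  exact: (Q m v Lv Hm).
apply: zspan0 => i j; apply/eqP; apply: negbNE; apply/negP => h.
by apply: nex; exists (i, j).
Qed.

End Red.


Section Bad.
Variables (d c : nat) (L : vec d c -> Prop).
Hypotheses (lat : is_lattice L) (inv : sym_invariant L) (hc : 0 < c) (hd : 0 < d).
Local Notation T := (idx d * 'I_c)%type.

Definition GK (k : 'I_d * 'I_d * 'I_6) (m : T) : nat :=
  let: (s, t, r) := k in
  match val r with
  | 0 => tnth m.1 s
  | 1 => tnth m.1 t - tnth m.1 s
  | 2 => nat_of_bool (tnth m.1 s <= tnth m.1 t)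
  | 3 => 1 - nat_of_bool (tnth m.1 s <= tnth m.1 t)
  | 4 => val m.2
  | _ => c - val m.2
  end.

Lemma Cb_of (m m' : T) : (forall k, GK k m <= GK k m') -> Cb m m'.
Proof.
move=> H; apply/and3P; split.
- have s0 : 'I_d := Ordinal hd.
  move: (H (s0, s0, inord 4)) (H (s0, s0, inord 5)); rewrite /GK /= !inordK //= => h4 h5.
  apply/eqP; apply: ord_inj; have := ltn_ord m.2; have := ltn_ord m'.2; lia.
- apply/forallP => s; have := H (s, s, inord 0); by rewrite /GK /= inordK.
- apply/forallP => s; apply/forallP => t; apply/implyP => st.
  have h0 := H (s, s, inord 0); have h0' := H (t, t, inord 0).
  have h1 := H (s, t, inord 1); have h2 := H (s, t, inord 2); have h3 := H (s, t, inord 3).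
  rewrite /GK /= !inordK //= in h0 h0' h1 h2 h3.
  rewrite st /= in h2 h3.
  case: (leqP (tnth m'.1 s) (tnth m'.1 t)) h2 h3 => //= st' _ _.
  lia.
Qed.

Lemma exists_good : exists Bs, valid L Bs /\ Good L Bs.
Proof.
apply: NNPP => H.
have m0 : T := ([tuple of nseq d 0], Ordinal hc).
have step : forall Bs : seq (vec d c * T), exists p : vec d c * T, valid L Bs ->
    [/\ L p.1, isLead p.1 p.2 & ~~ (gB Bs p.2 %| `|lc p|)%N].
  move=> Bs; case: (classic (valid L Bs)) => vB; last by exists ((fun _ _ => 0%R), m0).
  apply: NNPP => nex; apply: H; exists Bs; split => // v m Lv Hv.
  apply: negbNE; apply/negP => nd; apply: nex; exists (v, m) => _; by split.
pose nxt Bs := proj1_sig (constructive_indefinite_description _ (step Bs)).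
have nxtP Bs : valid L Bs -> [/\ L (nxt Bs).1, isLead (nxt Bs).1 (nxt Bs).2 &
                   ~~ (gB Bs (nxt Bs).2 %| `|lc (nxt Bs)|)%N].
  exact: (proj2_sig (constructive_indefinite_description _ (step Bs))).
pose fix pre k := if k is k'.+1 then rcons (pre k') (nxt (pre k')) else [::].
pose x k := nxt (pre k).
have vpre : forall k, valid L (pre k).
  elim=> [//|k IH] p /= h; case: (In_rcons h) => [/IH //|->].
  by have [? ? _] := nxtP _ IH.
have xP k : [/\ L (x k).1, isLead (x k).1 (x k).2 & ~~ (gB (pre k) (x k).2 %| `|lc (x k)|)%N].
  exact: nxtP.
have inpre : forall a k, a < k -> List.In (x a) (pre k).
  move=> a; elim=> [//|k IH]; rewrite ltnS leq_eqVlt => /orP[/eqP ->|ak] /=.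
    by apply: In_rcons2; right.
  by apply: In_rcons2; left; apply: IH.
have [phi [inc mono]] := subseq_fam GK (fun k => (x k).2) (enum (@predT ('I_d * 'I_d * 'I_6)%type)).
have Cphi : forall a b, a <= b -> Cb (x (phi a)).2 (x (phi b)).2.
  move=> a b ab; apply: Cb_of => k; apply: mono => //; exact: mem_enum.
pose y k := `|lc (x (phi k))|%N.
pose fix hh k := if k is k'.+1 then gcdn (hh k') (y k) else y 0.
have hdv : forall k a, a <= k -> (hh k %| y a)%N.
  elim=> [|k IH] a; first by rewrite leqn0 => /eqP ->.
  rewrite leq_eqVlt => /orP[/eqP ->|]; first exact: dvdn_gcdr.
  by rewrite ltnS => /IH; apply: dvdn_trans; apply: dvdn_gcdl.
have gdv : forall Bs m k, (forall a, a <= k -> List.In (x (phi a)) Bs /\ Cb (x (phi a)).2 m) ->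
    (gB Bs m %| hh k)%N.
  move=> Bs m; elim=> [|k IH] Ha.
    by have [i1 i2] := Ha 0 (leqnn 0); apply: gB_dvd.
  rewrite /= dvdn_gcd IH; last by move=> a ak; apply: Ha; apply: leqW.
  by have [i1 i2] := Ha k.+1 (leqnn _); apply: gB_dvd.
have ndv : forall k, ~~ (hh k %| y k.+1)%N.
  move=> k; apply/negP => h.
  have [_ _ nd] := xP (phi k.+1); apply: (negP nd).
  apply: (dvdn_trans _ h); apply: gdv => a ak; split; last exact: (Cphi _ _ (leqW ak)).
  by apply: inpre; apply: inc; rewrite ltnS.
have hpos : forall k, 0 < hh k.
  move=> k; have := hdv k 0 (leq0n k); have [_ [nz _] _] := xP (phi 0).
  rewrite /y /lc; case: (hh k) => //; rewrite dvd0n absz_eq0 => /eqP E.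
  by rewrite E eqxx in nz.
have hdec : forall k, hh k.+1 < hh k.
  move=> k /=; rewrite ltn_neqAle dvdn_leq ?dvdn_gcdl ?hpos // andbT.
  apply/negP => /eqP E; apply: (negP (ndv k)); rewrite -E; exact: dvdn_gcdr.
have : forall k, hh k + k <= hh 0.
  elim=> [|k IH]; first by rewrite addn0.
  move: (hdec k) IH; lia.
move/(_ (hh 0).+1); lia.
Qed.

End Bad.


Unset Implicit Arguments.
Local Open Scope ring_scope.

Theorem theorem5p1 (c d : nat) (hc : (0 < c)%N) (hd : (0 < d)%N)
  (L : vec d c -> Prop) :
  is_lattice L -> sym_invariant L ->
  exists B : seq (vec d c),
    (forall u, List.In u B -> L u) /\
    (forall v, L v <-> zspan (sym_orbit B) v).
Proof.
move=> lat inv.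
have [Bs [vB GB]] := exists_good L hc hd.
exists (map fst Bs); split.
  by move=> u h; have [p [pB ->]] := In_map_seq h; case: (vB p pB).
move=> v; split; first exact: (reduce lat inv vB GB).
move=> [l [Hl El]].
apply: (Lext (Lcomb lat (l := l) _)).
  move=> q ql; have [s [u [Ss uB Au]]] := Hl q ql.
  apply: (inv s Ss u q.2 _ Au).
  by have [p [pB ->]] := In_map_seq uB; case: (vB p pB).
by move=> i j; rewrite El.
Qed.
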